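(* Consider any instance of the rescheduling problem $(1, h_1 \mid \Delta_{\max}\le k \mid \sum_{j=1}^n w_j C_j)$ (i.e., $\mu=0$) described in the context, and suppose it admits a feasible schedule. Then there exists an optimal schedule $\sigma^*$ such that, if the earlier schedule of $\sigma^*$ contains an idle period, then $\Delta_{\max}(\sigma^* )=k$.
   Context: An instance consists of $n$ jobs $J_1,\dots,J_n$, where $J_j$ has a positive integer processing time $p_j$ and positive integer weight $w_j$, indexed so that $p_1/w_1\le\cdots\le p_n/w_n$; integers $0\le T_1<T_2$ (machine unavailable during $[T_1,T_2]$); an integer $k$. The original schedule $\pi^*$ processes $J_1,\dots,J_n$ in order consecutively from time $0$ without idling, so $S_j(\pi^* )=\sum_{i<j}p_i$, $C_j(\pi^* )=\sum_{i\le j}p_i$. A schedule $\sigma$ gives start times $S_j(\sigma)\ge0$, non-preemptive single-machine processing, $C_j(\sigma)=S_j(\sigma)+p_j$, no overlaps, and each job has $C_j(\sigma)\le T_1$ or $S_j(\sigma)\ge T_2$. $\Delta_j=|C_j(\sigma)-C_j(\pi^* )|$, $\Delta_{\max}=\max_j\Delta_j$. Feasible means $\Delta_{\max}\le k$; optimal means feasible and minimizing $\sum_j w_jC_j(\sigma)$. The earlier schedule consists of jobs with $C_j(\sigma)\le T_1$. An idle period of the earlier schedule is a maximal time interval of positive length within $[0,c]$, where $c$ is the largest completion time of an earlier-schedule job, during which no job is processed. Standing assumptions: some job has $C_j(\pi^* )>T_1$; with $j_1$ the smallest such index, $\min_jp_j\le T_1<\sum_jp_j$ and $T_2-S_{j_1}(\pi^*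 )\le k$. *)

(* Defs.v *)
From HB Require Import structures.
From mathcomp Require Import all_boot all_order all_algebra.
From mathcomp Require Import reals.
Set Implicit Arguments. Unset Strict Implicit. Unset Printing Implicit Defensive.
Import Order.TTheory GRing.Theory Num.Theory.
Local Open Scope ring_scope.

Section Resched.
Variables (R : realType) (n : nat) (p w : 'I_n -> nat).

(* original schedule pi*: jobs processed in index order from time 0 *)
Definition Spi (j : 'I_n) : nat := (\sum_(i < n | (i < j)%N) p i)%N.
Definition Cpi (j : 'I_n) : nat := (Spi j + p j)%N.

Definition Cs (S : 'I_n -> R) (j : 'I_n) : R := S j + (p j)%:R.

(* valid schedule with machine unavailable during [T1, T2] *)
Definition valid_schedule (T1 T2 : nat) (S : 'I_n -> R) : Prop :=
  (forall j, 0 <= S j) /\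
  (forall i j, i != j -> Cs S i <= S j \/ Cs S j <= S i) /\
  (forall j, Cs S j <= T1%:R \/ T2%:R <= S j).

Definition Delta (S : 'I_n -> R) (j : 'I_n) : R := `|Cs S j - (Cpi j)%:R|.

Definition Dmax (S : 'I_n -> R) : R := \big[Num.max/0]_(j < n) Delta S j.

Definition feasible (T1 T2 : nat) (k : int) (S : 'I_n -> R) : Prop :=
  valid_schedule T1 T2 S /\ Dmax S <= k%:~R.

Definition objective (S : 'I_n -> R) : R := \sum_(j < n) (w j)%:R * Cs S j.

Definition optimal (T1 T2 : nat) (k : int) (S : 'I_n -> R) : Prop :=
  feasible T1 T2 k S /\
  forall S', feasible T1 T2 k S' -> objective S <= objective S'.

(* largest completion time among jobs of the earlier schedule (0 if none) *)
Definition c_earlier (T1 : nat) (S : 'I_n -> R) : R :=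
  \big[Num.max/0]_(j < n | Cs S j <= T1%:R) Cs S j.

Definition no_processing (S : 'I_n -> R) (a b : R) : Prop :=
  forall t, a < t -> t < b -> forall j, ~ (S j < t /\ t < Cs S j).

Definition idle_period (T1 : nat) (S : 'I_n -> R) (a b : R) : Prop :=
  [/\ a < b, 0 <= a, b <= c_earlier T1 S, no_processing S a b &
      forall a' b', a' <= a -> b <= b' -> 0 <= a' -> b' <= c_earlier T1 S ->
        no_processing S a' b' -> a' = a /\ b' = b].

Definition has_idle_period (T1 : nat) (S : 'I_n -> R) : Prop :=
  exists a b, idle_period T1 S a b.

End Resched.

(* Main.v *)
Require Import Defs.
From HB Require Import structures.
From mathcomp Require Import all_boot all_order all_algebra.
From mathcomp Require Import reals.
From mathcomp Require Import zify ring lra.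
From Stdlib Require Import Classical.
Import Order.TTheory GRing.Theory Num.Theory.
Local Open Scope ring_scope.

Lemma min_ex (P : nat -> Prop) : (exists m, P m) ->
  exists m, P m /\ forall m', P m' -> (m <= m')%N.
Proof.
move=> [m0 Hm0]; apply: NNPP => H.
suff: forall N m, (m < N)%N -> ~ P m by move/(_ m0.+1 m0 (ltnSn _)).
elim=> [//|N IH] m; rewrite ltnS leq_eqVlt => /orP[/eqP->|/IH//] PN.
apply: H; exists N; split=> // m' Pm'; rewrite leqNgt; apply/negP=> /IH; exact.
Qed.

Section S.
Set Implicit Arguments.
Variables (R : realType) (n : nat) (p w : 'I_n -> nat).

Lemma Dmax_ge0 (S : 'I_n -> R) : 0 <= Dmax p S.
Proof.
rewrite /Dmax; elim/big_ind: _ => //.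
  by move=> x y; rewrite le_max => ->.
by move=> j _; exact: normr_ge0.
Qed.

Lemma Delta_le_Dmax (S : 'I_n -> R) j : Delta p S j <= Dmax p S.
Proof. by rewrite /Dmax (bigD1 j) //= le_max lexx. Qed.

Lemma Dmax_le (S : 'I_n -> R) x : 0 <= x -> (forall j, Delta p S j <= x) -> Dmax p S <= x.
Proof.
move=> x0 H; rewrite /Dmax; elim/big_ind: _ => //.
by move=> a b; rewrite ge_max => -> ->.
Qed.

Lemma c_earlier_lt (T1 : nat) (S : 'I_n -> R) b : 0 < b ->
  (forall j, Cs p S j <= T1%:R -> Cs p S j < b) -> c_earlier p T1 S < b.
Proof.
move=> b0 H; rewrite /c_earlier; elim/big_ind: _ => //.
  by move=> a c; rewrite gt_max => -> ->.
Qed.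

Definition trS (S : 'I_n -> R) (j : 'I_n) : R := (Num.truncn (S j))%:R.

Lemma int_lemma (x : R) (m k : int) (t : nat) :
  m%:~R <= x -> x < (t.+1)%:R -> m%:~R <= (t%:R : R).
Proof.
move=> h1 h2.
have : m%:~R < ((t.+1)%:Z)%:~R :> R by rewrite (le_lt_trans h1) //.
rewrite ltr_int => h; have h' : (m <= t%:Z)%R by lia.
by rewrite -(ler_int R) in h'.
Qed.

Lemma trS_feasible T1 T2 k S : feasible p T1 T2 k S -> feasible p T1 T2 k (trS S).
Proof.
move=> [[h0 [hov hside]] hD].
have itv j := truncn_itv (h0 j).
have ge j (m : nat) : m%:R <= S j -> (m <= Num.truncn (S j))%N.
  by move=> hm; rewrite truncn_ge_nat.
split; [split; [|split]|].
- by move=> j; rewrite /trS ler0n.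
- move=> i j /hov [] h; [left|right]; rewrite /Cs /trS -natrD ler_nat ge //;
  rewrite natrD; move: (itv i) (itv j) h; rewrite /Cs => /andP[? ?] /andP[? ?]; lra.
- move=> j; case: (hside j) => h; [left|right]; rewrite /Cs /trS.
    move: (itv j) h; rewrite /Cs => /andP[? ?] ?; lra.
  by rewrite ler_nat ge.
- apply: Dmax_le; first by apply: le_trans (Dmax_ge0 S) hD.
  move=> j; have := le_trans (Delta_le_Dmax S j) hD.
  rewrite /Delta /Cs /trS !ler_norml => /andP[l u].
  move: (itv j) => /andP[i1 i2].
  have := @int_lemma (S j) ((Cpi p j)%:Z - (p j)%:Z - k) k _ _ i2.
  rewrite !intrD !intrN /= -!pmulrn => h; apply/andP; split; [have := h ltac:(lra)|]; lra.
Qed.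


Lemma obj_trS (S : 'I_n -> R) : (forall j, 0 <= S j) -> objective p w (trS S) <= objective p w S.
Proof.
move=> h0.
rewrite /objective; apply: ler_sum => j _; apply: ler_wpM2l; first exact: ler0n.
by rewrite /Cs /trS lerD2r truncn_le.
Qed.

Lemma idle_Dmax T1 T2 k (S : 'I_n -> R) : optimal p w T1 T2 k S -> (forall j, (0 < p j)%N) ->
  (forall j, (0 < w j)%N) -> (T1 < T2)%N -> has_idle_period p T1 S -> Dmax p S = k%:~R.
Proof.
move=> [[[h0 [hov hside]] hD] hopt] hp hw hT [a [b [ab a0 bc NP _]]].
have hpR j : 0 < (p j)%:R :> R by rewrite ltr0n.
have hTR : T1%:R < T2%:R :> R by rewrite ltr_nat.
apply/eqP; rewrite eq_le hD /= leNgt; apply/negP => hlt.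
have hsplit j : Cs p S j <= a \/ b <= S j.
  case: (lerP (Cs p S j) a) => [h|h]; [by left|right].
  rewrite leNgt; apply/negP => hb.
  set u := Num.max a (S j); set v := Num.min b (Cs p S j).
  have hu1 : a <= u by rewrite le_max lexx.
  have hu2 : S j <= u by rewrite le_max lexx orbT.
  have hv1 : v <= b by rewrite ge_min lexx.
  have hv2 : v <= Cs p S j by rewrite ge_min lexx orbT.
  have huv : u < v.
    rewrite gt_max !lt_min ab h hb /=; move: (hpR j); rewrite /Cs; lra.
  apply: (NP ((u + v) / 2) _ _ j); [lra|lra|split; lra].
have [j0 [hj0T hj0b]] : exists j, Cs p S j <= T1%:R /\ b <= Cs p S j.
  apply: NNPP => H.
  have : c_earlier p T1 S < b.
    apply: c_earlier_lt; first lra.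
    move=> j hj; rewrite ltNge; apply/negP => hb; apply: H; exists j; done.
  lra.
have hj0 : b <= S j0 by case: (hsplit j0) => //; lra.
have hD0 := Dmax_ge0 S.
set eps := Num.min (b - a) (k%:~R - Dmax p S).
have e0 : 0 < eps by rewrite lt_min !subr_gt0 ab hlt.
have e1 : eps <= b - a by rewrite ge_min lexx.
have e2 : eps <= k%:~R - Dmax p S by rewrite ge_min lexx orbT.
pose sh j := (b <= S j) && (Cs p S j <= T1%:R).
pose S' j := if sh j then S j - eps else S j.
have fS' : feasible p T1 T2 k S'.
  split; [split; [|split]|].
  - move=> j; rewrite /S'; case: ifP => [/andP[? _]|_]; [lra|exact: h0].
  - move=> i j ij; rewrite /Cs /S'.
    case hi: (sh i); case hj: (sh j).
    + by move: (hov i j ij); rewrite /Cs; case=> h; [left|right]; lra.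
    + move: hi => /andP[hbi]; rewrite /Cs => hiT.
      case: (hsplit j); rewrite /Cs => h; first by right; lra.
      have hjT : ~~ (S j + (p j)%:R <= T1%:R) by move: hj; rewrite /sh h /Cs /= => ->.
      case: (hside j); rewrite /Cs => h'; first by rewrite h' in hjT.
      left; lra.
    + move: hj => /andP[hbj]; rewrite /Cs => hjT.
      case: (hsplit i); rewrite /Cs => h; first by left; lra.
      have hiT : ~~ (S i + (p i)%:R <= T1%:R) by move: hi; rewrite /sh h /Cs /= => ->.
      case: (hside i); rewrite /Cs => h'; first by rewrite h' in hiT.
      right; lra.
    + exact: hov.
  - move=> j; rewrite /Cs /S'; case hj: (sh j).
      by move: hj => /andP[_]; rewrite /Cs => ?; left; lra.
    exact: hside.
  - apply: Dmax_le; first lra.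
    move=> j; have := Delta_le_Dmax S j; rewrite /Delta /Cs /S' !ler_norml.
    case: (sh j) => /andP[l u]; apply/andP; split; lra.
have := hopt S' fS'; apply/negP; rewrite -ltNge.
rewrite /objective (bigD1 j0) //= [X in _ < X](bigD1 j0) //=.
apply: ltr_leD.
  rewrite ltr_pM2l ?ltr0n // /Cs /S'.
  have -> : sh j0 by rewrite /sh hj0 hj0T.
  lra.
apply: ler_sum => i _; apply: ler_wpM2l; first exact: ler0n.
rewrite /Cs /S'; case: (sh i); lra.
Qed.
End S.

Definition objn {n : nat} (p w : 'I_n -> nat) (s : 'I_n -> nat) : nat :=
  (\sum_(j < n) w j * (s j + p j))%N.

Lemma objnE (R : realType) n (p w : 'I_n -> nat) (s : 'I_n -> nat) :
  objective p w (fun j => (s j)%:R : R) = (objn p w s)%:R.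
Proof. by rewrite /objective /objn natr_sum; apply: eq_bigr => j _; rewrite natrM natrD. Qed.

Theorem lemma6 (R : realType) (n : nat) (p w : 'I_n -> nat)
    (T1 T2 : nat) (k : int)
    (hp : forall j, (0 < p j)%N) (hw : forall j, (0 < w j)%N)
    (hsort : forall i j : 'I_n, (i <= j)%N -> (p i * w j <= p j * w i)%N)
    (hT : (T1 < T2)%N)
    (hcross : exists j, (T1 < Cpi p j)%N)
    (hminp : exists j, (p j <= T1)%N)
    (hsum : (T1 < \sum_(j < n) p j)%N)
    (hj1 : forall j1 : 'I_n, (T1 < Cpi p j1)%N ->
             (forall i : 'I_n, (T1 < Cpi p i)%N -> (j1 <= i)%N) ->
             (T2%:Z - (Spi p j1)%:Z <= k)%R)
    (hfeas : exists S : 'I_n -> R, feasible p T1 T2 k S) :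
  exists S : 'I_n -> R, optimal p w T1 T2 k S /\
    (has_idle_period p T1 S -> Dmax p S = k%:~R).
Proof.
have ex0 : exists m, exists s : 'I_n -> nat,
   feasible p T1 T2 k (fun j => (s j)%:R : R) /\ objn p w s = m.
  by case: hfeas => S0 f0; exists (objn p w (fun j => Num.truncn (S0 j)));
        exists (fun j => Num.truncn (S0 j)); split=> //; have := trS_feasible f0.
have [m [[s [fs es]] mmin]] := @min_ex _ ex0.
have opt : optimal p w T1 T2 k (fun j => (s j)%:R : R).
  split=> // S' f'.
  have f2 := trS_feasible f'.
  have h0' : forall j, 0 <= S' j by case: f' => -[].
  apply: (le_trans _ (obj_trS R p w S' h0')).
  rewrite /trS objnE objnE ler_nat es; apply: mmin.
  by exists (fun j => Num.truncn (S' j)).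
exists (fun j => (s j)%:R); split=> //.
exact: idle_Dmax opt hp hw hT.
Qed.
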